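(* Let $\mathscr{H}$ be a finite-dimensional complex Hilbert space and let $A=\{a_k\}_{k=1}^{m}$ and $B=\{b_j\}_{j=1}^{n}$ be frames of $\mathscr{H}$, where $A$ has lower and upper frame bounds $\alpha_1,\alpha_2$ and $B$ has lower and upper frame bounds $\beta_1,\beta_2$. Let $S\subseteq\{1,\dots,m\}$ and $T\subseteq\{1,\dots,n\}$ satisfy $$|S|\,|T|\,M(A^*,B)^2<\frac{\beta_1}{\alpha_2}.$$ Then for every $x\in\mathscr{H}$, $$C(S,T)\,\|x\|\le\Big(\sum_{k\in S^c}|\langle x,a_k\rangle|^2\Big)^{1/2}+\Big(\sum_{j\in T^c}|\langle x,b_j\rangle|^2\Big)^{1/2},$$ where $$C(S,T)=\Big(1-\Big(\tfrac{\alpha_2}{\beta_1}\Big)^{1/2}M(A^*,B)\,|S|^{1/2}|T|^{1/2}\Big)\Big(\max\Big\{\beta_1^{-1/2},\ \Big(1+\Big(\tfrac{\beta_2}{\beta_1}\Big)^{1/2}\Big)\alpha_1^{-1/2}\,m\,M(A^*,A)\Big\}\Big)^{-1}.$$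
   Context: A finite family $\{a_k\}_{k=1}^m$ is a frame of $\mathscr{H}$ with lower and upper frame bounds $0<\alpha_1\le\alpha_2$ if $\alpha_1\|x\|^2\le\sum_k|\langle x,a_k\rangle|^2\le\alpha_2\|x\|^2$ for all $x$. The canonical dual frame of $A$ is $A^*=\{a_k^*\}_{k=1}^m$ with $a_k^*=F^{-1}a_k$, where $F x=\sum_k\langle x,a_k\rangle a_k$ is the frame operator of $A$. For two families $U=\{u_k\}$, $V=\{v_j\}$, the coherence is $M(U,V)=\max_{k,j}|\langle u_k,v_j\rangle|$. $S^c$ and $T^c$ are the complements in $\{1,\dots,m\}$ and $\{1,\dots,n\}$. *)

(* Defs.v *)
From HB Require Import structures.
From mathcomp Require Import all_boot all_order all_algebra.
From mathcomp Require Import reals.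
From mathcomp Require Import complex.
Set Implicit Arguments.
Unset Strict Implicit.
Unset Printing Implicit Defensive.
Import Order.TTheory GRing.Theory Num.Theory.
Local Open Scope ring_scope.

(* The finite-dimensional complex Hilbert space H is modelled as C^d
   (column vectors 'cV[R[i]]_d), with R a realType, so R[i] is the
   field of complex numbers. *)

Section Frames.
Variable R : realType.
Local Notation C := R[i].

Definition cmod (z : C) : R := Num.sqrt (complex.Re z ^+ 2 + complex.Im z ^+ 2).

Definition ip (d : nat) (x y : 'cV[C]_d) : C :=
  \sum_(i < d) x i 0 * conjc (y i 0).

Definition hnorm (d : nat) (x : 'cV[C]_d) : R := Num.sqrt (complex.Re (ip x x)).

Definition is_frame (d m : nat) (a : 'I_m -> 'cV[C]_d) (al1 al2 : R) : Prop :=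
  0 < al1 /\ al1 <= al2 /\
  forall x : 'cV[C]_d,
    al1 * hnorm x ^+ 2 <= \sum_(k < m) cmod (ip x (a k)) ^+ 2 /\
    \sum_(k < m) cmod (ip x (a k)) ^+ 2 <= al2 * hnorm x ^+ 2.

Definition adjmx (p q : nat) (M : 'M[C]_(p, q)) : 'M[C]_(q, p) :=
  map_mx (@conjc R) M^T.

(* matrix of the frame operator F x = sum_k <x,a_k> a_k *)
Definition frame_op (d m : nat) (a : 'I_m -> 'cV[C]_d) : 'M[C]_d :=
  \sum_(k < m) (a k *m adjmx (a k)).

Definition dual_frame (d m : nat) (a : 'I_m -> 'cV[C]_d) : 'I_m -> 'cV[C]_d :=
  fun k => invmx (frame_op a) *m a k.

Definition coherence (d m n : nat) (u : 'I_m -> 'cV[C]_d) (v : 'I_n -> 'cV[C]_d) : R :=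
  \big[Num.max/0]_(k < m) \big[Num.max/0]_(j < n) cmod (ip (u k) (v j)).

End Frames.

(* Main.v *)
Require Import Defs.
From HB Require Import structures.
From mathcomp Require Import all_boot all_order all_algebra.
From mathcomp Require Import reals.
From mathcomp Require Import complex.
From mathcomp Require Import ring lra.
Set Implicit Arguments.
Unset Strict Implicit.
Unset Printing Implicit Defensive.
Import Order.TTheory GRing.Theory Num.Theory.
Local Open Scope ring_scope.

Section RL.
Variable R : realType.

Lemma sqrt_le_of (x y : R) : 0 <= y -> x <= y ^+ 2 -> Num.sqrt x <= y.
Proof.
move=> y0 h; have: Num.sqrt x <= Num.sqrt (y ^+ 2) by rewrite ler_wsqrtr.
by rewrite sqrtr_sqr ger0_norm.
Qed.

Lemma CS1 (I : finType) (P : {set I}) (g : I -> R) :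
  (\sum_(i in P) g i) ^+ 2 <= #|P|%:R * \sum_(i in P) g i ^+ 2.
Proof.
have H : 0 <= \sum_(i in P) \sum_(j in P) (g i - g j) ^+ 2.
  by apply: sumr_ge0 => i _; apply: sumr_ge0 => j _; apply: sqr_ge0.
set q := \sum_(i in P) g i ^+ 2; set s := \sum_(i in P) g i.
have E1 : forall i, \sum_(j in P) (g i - g j) ^+ 2 =
    #|P|%:R * g i ^+ 2 + q - (g i * s) *+ 2.
  move=> i; rewrite (eq_bigr (fun j => g i ^+ 2 + g j ^+ 2 - (g i * g j) *+ 2));
    last by move=> j _; rewrite sqrrB; ring.
  by rewrite sumrB big_split /= sumr_const sumrMnl -mulr_sumr -/q -/s mulr_natl.
rewrite (eq_bigr _ (fun i _ => E1 i)) sumrB big_split /= sumrMnl -mulr_suml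
  -mulr_sumr sumr_const -mulr_natl in H.
rewrite -/q -/s in H.
rewrite mulr1 -mulr_natl in H; nra.
Qed.

Lemma sum_le_sqrt (I : finType) (P : {set I}) (g : I -> R) :
  (forall i, 0 <= g i) ->
  \sum_(i in P) g i <= Num.sqrt (#|P|%:R) * Num.sqrt (\sum_(i in P) g i ^+ 2).
Proof.
move=> g0; rewrite -sqrtrM ?ler0n //.
have s0 : 0 <= \sum_(i in P) g i by apply: sumr_ge0.
rewrite -(ger0_norm s0) -sqrtr_sqr ler_wsqrtr //; exact: CS1.
Qed.

Lemma sum_sub_le (I : finType) (P : {set I}) (f : I -> R) :
  (forall i, 0 <= f i) -> \sum_(i in P) f i <= \sum_i f i.
Proof.
move=> f0; rewrite [X in _ <= X](bigID (mem P)) /= lerDl.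
by apply: sumr_ge0.
Qed.

Lemma sqrt_split (I : finType) (P : {set I}) (f : I -> R) :
  (forall i, 0 <= f i) ->
  Num.sqrt (\sum_i f i) <= Num.sqrt (\sum_(i in P) f i) + Num.sqrt (\sum_(i in ~: P) f i).
Proof.
move=> f0; rewrite (bigID (mem P)) /=.
have -> : \sum_(i | i \notin P) f i = \sum_(i in ~: P) f i.
  by apply: eq_bigl => i; rewrite in_setC.
set A := \sum_(i in P) f i; set B := \sum_(i in ~: P) f i.
have A0 : 0 <= A by apply: sumr_ge0.
have B0 : 0 <= B by apply: sumr_ge0.
apply: sqrt_le_of; first by rewrite addr_ge0 ?sqrtr_ge0.
rewrite sqrrD !sqr_sqrtr //.
have : 0 <= Num.sqrt A * Num.sqrt B *+ 2 by rewrite mulrn_wge0 // mulr_ge0 ?sqrtr_ge0.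
lra.
Qed.

Lemma L2 (I : finType) (P : {set I}) (f g : I -> R) (c : R) :
  0 <= c -> (forall i, 0 <= g i) -> (forall i, 0 <= f i) -> (forall i, f i <= c + g i) ->
  Num.sqrt (\sum_(i in P) f i ^+ 2) <= Num.sqrt (#|P|%:R) * c + Num.sqrt (\sum_(i in P) g i ^+ 2).
Proof.
move=> c0 g0 f0 fg.
apply: sqrt_le_of; first by rewrite addr_ge0 ?mulr_ge0 ?sqrtr_ge0.
apply: (@le_trans _ _ (\sum_(i in P) (c + g i) ^+ 2)).
  apply: ler_sum => i _; rewrite ler_sqr ?nnegrE ?addr_ge0 //.
under eq_bigr => i _ do rewrite sqrrD.
rewrite !big_split /= sumr_const -mulr_sumr.
have := @sum_le_sqrt _ P g g0.
set s := \sum_(i in P) g i; set q := \sum_(i in P) g i ^+ 2.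
have q0 : 0 <= q by apply: sumr_ge0 => i _; apply: sqr_ge0.
move=> hs.
rewrite sqrrD exprMn !sqr_sqrtr ?ler0n //.
have : c * s <= c * (Num.sqrt #|P|%:R * Num.sqrt q) by rewrite ler_wpM2l.
rewrite -mulr_natl.
nra.
Qed.

End RL.

Section CX.
Variable R : realType.
Local Notation C := R[i].

Lemma conjcM' (a b : C) : conjc (a * b) = conjc a * conjc b.
Proof. exact: rmorphM. Qed.
Lemma conjc_sum' (I : finType) (P : pred I) (F : I -> C) :
  conjc (\sum_(i in P) F i) = \sum_(i in P) conjc (F i).
Proof. exact: rmorph_sum. Qed.
Lemma rc_sum (I : finType) (P : pred I) (F : I -> R) :
  (\sum_(i in P) F i)%:C%C = \sum_(i in P) (F i)%:C%C.
Proof. exact: rmorph_sum. Qed.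

Lemma cmodE (z : C) : (cmod z)%:C%C = `|z|.
Proof. by rewrite normc_def. Qed.
Lemma sqcmod (z : C) : (cmod z ^+ 2)%:C%C = z * conjc z.
Proof. by rewrite -normCK -cmodE rmorphXn. Qed.
Lemma cmod_ge0 (z : C) : 0 <= cmod z.
Proof. exact: sqrtr_ge0. Qed.
Lemma cmodM (z w : C) : cmod (z * w) = cmod z * cmod w.
Proof. by apply: complexI; rewrite rmorphM /= !cmodE normrM. Qed.
Lemma cmodD (z w : C) : cmod (z + w) <= cmod z + cmod w.
Proof. by rewrite -lecR rmorphD /= !cmodE ler_normD. Qed.
Lemma cmod_sum (I : finType) (P : pred I) (F : I -> C) :
  cmod (\sum_(i in P) F i) <= \sum_(i in P) cmod (F i).
Proof.
have h : `|\sum_(i in P) F i| <= \sum_(i in P) `|F i| := ler_norm_sum _ _ _.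
have E : \sum_(i in P) `|F i| = (\sum_(i in P) cmod (F i))%:C%C.
  by rewrite rc_sum; apply: eq_bigr => i _; rewrite -cmodE.
by rewrite E -cmodE lecR in h.
Qed.
Lemma cmod_eq0 (z : C) : cmod z = 0 -> z = 0.
Proof. by move=> h; apply/eqP; rewrite -normr_eq0 -cmodE h. Qed.

Lemma ip_suml d (I : finType) (P : pred I) (F : I -> 'cV[C]_d) y :
  ip (\sum_(k in P) F k) y = \sum_(k in P) ip (F k) y.
Proof.
rewrite /ip exchange_big /=; apply: eq_bigr => i _.
by rewrite summxE mulr_suml.
Qed.
Lemma ip_scalel d (c : C) (x y : 'cV[C]_d) : ip (c *: x) y = c * ip x y.
Proof. by rewrite /ip mulr_sumr; apply: eq_bigr => i _; rewrite mxE mulrA. Qed.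
Lemma ip_addl d (x y z : 'cV[C]_d) : ip (x + y) z = ip x z + ip y z.
Proof. by rewrite /ip -big_split; apply: eq_bigr => i _; rewrite mxE mulrDl. Qed.
Lemma ip_conj d (x y : 'cV[C]_d) : ip y x = conjc (ip x y).
Proof.
rewrite /ip conjc_sum'; apply: eq_bigr => i _.
by rewrite conjcM' conjcK mulrC.
Qed.
Lemma ip0l d (y : 'cV[C]_d) : ip 0 y = 0.
Proof. by rewrite /ip big1 // => i _; rewrite mxE mul0r. Qed.

Lemma ipxx d (x : 'cV[C]_d) : ip x x = (\sum_i cmod (x i 0) ^+ 2)%:C%C.
Proof. by rewrite rc_sum; apply: eq_bigr => i _; rewrite sqcmod. Qed.

Lemma hnorm_sq d (x : 'cV[C]_d) : hnorm x ^+ 2 = \sum_i cmod (x i 0) ^+ 2.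
Proof.
rewrite /hnorm ipxx /= sqr_sqrtr //.
by apply: sumr_ge0 => i _; apply: sqr_ge0.
Qed.
Lemma hnorm_ge0 d (x : 'cV[C]_d) : 0 <= hnorm x.
Proof. exact: sqrtr_ge0. Qed.

Lemma adj_mul d (v x : 'cV[C]_d) : adjmx v *m x = (ip x v)%:M.
Proof.
apply/matrixP => i j; rewrite !ord1 !mxE /= mulr1n /ip.
by apply: eq_bigr => l _; rewrite !mxE mulrC.
Qed.

Lemma Fx_eq d m (a : 'I_m -> 'cV[C]_d) x :
  frame_op a *m x = \sum_k ip x (a k) *: a k.
Proof.
rewrite /frame_op mulmx_suml; apply: eq_bigr => k _.
by rewrite -mulmxA adj_mul mul_mx_scalar.
Qed.

Lemma frame_inj d m (a : 'I_m -> 'cV[C]_d) al1 al2 :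
  is_frame a al1 al2 -> forall x : 'cV[C]_d, frame_op a *m x = 0 -> x = 0.
Proof.
move=> [al10 [_ hf]] x Fx0.
have E : ip (frame_op a *m x) x = (\sum_k cmod (ip x (a k)) ^+ 2)%:C%C.
  rewrite Fx_eq ip_suml rc_sum; apply: eq_bigr => k _.
  by rewrite ip_scalel sqcmod -ip_conj.
rewrite Fx0 ip0l in E.
have S0 : \sum_k cmod (ip x (a k)) ^+ 2 = 0 by apply: complexI; rewrite -E.
have [h1 _] := hf x; rewrite S0 in h1.
have h2 : hnorm x ^+ 2 = 0.
  apply/eqP; rewrite eq_le sqr_ge0 andbT.
  by rewrite -(pmulr_rle0 _ al10).
rewrite hnorm_sq in h2.
apply/matrixP => i j; rewrite ord1 mxE.
apply: cmod_eq0; apply/eqP; rewrite -sqrf_eq0; apply/eqP.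
move/eqP: h2; rewrite psumr_eq0 => [/allP h|i' _]; last exact: sqr_ge0.
by apply/eqP; apply: h; rewrite mem_index_enum.
Qed.

Lemma frame_unit d m (a : 'I_m -> 'cV[C]_d) al1 al2 :
  is_frame a al1 al2 -> frame_op a \in unitmx.
Proof.
move=> hf; rewrite -unitmx_tr -row_free_unit -kermx_eq0.
apply/eqP/row_matrixP => i; rewrite row0.
set u := row i _.
have hu : u *m (frame_op a)^T = 0 by apply/sub_kermxP; exact: row_sub.
have : frame_op a *m u^T = 0 by rewrite -[frame_op a]trmxK -trmx_mul hu trmx0.
move/(frame_inj hf) => h.
by rewrite -[u]trmxK h trmx0.
Qed.

Lemma recon d m (a : 'I_m -> 'cV[C]_d) al1 al2 :
  is_frame a al1 al2 -> forall x : 'cV[C]_d, x = \sum_k ip x (a k) *: dual_frame a k.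
Proof.
move=> hf x.
rewrite -{1}(mulKmx (frame_unit hf) x) Fx_eq mulmx_sumr.
by apply: eq_bigr => k _; rewrite /dual_frame scalemxAr.
Qed.

Lemma coh_le d m n (u : 'I_m -> 'cV[C]_d) (v : 'I_n -> 'cV[C]_d) k j :
  cmod (ip (u k) (v j)) <= coherence u v.
Proof.
rewrite /coherence.
apply: le_trans (le_bigmax _ _ k).
exact: (le_bigmax _ (fun j => cmod (ip (u k) (v j))) j).
Qed.
Lemma coh_ge0 d m n (u : 'I_m -> 'cV[C]_d) (v : 'I_n -> 'cV[C]_d) :
  0 <= coherence u v.
Proof. exact: bigmax_ge_id. Qed.

End CX.

Theorem mainTheorem5 (R : realType) (d m n : nat)
  (a : 'I_m -> 'cV[R[i]]_d) (b : 'I_n -> 'cV[R[i]]_d)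
  (al1 al2 be1 be2 : R)
  (hA : is_frame a al1 al2) (hB : is_frame b be1 be2)
  (S : {set 'I_m}) (T : {set 'I_n}) :
  #|S|%:R * #|T|%:R * coherence (dual_frame a) b ^+ 2 < be1 / al2 ->
  forall x : 'cV[R[i]]_d,
    (1 - Num.sqrt (al2 / be1) * coherence (dual_frame a) b
           * Num.sqrt (#|S|%:R) * Num.sqrt (#|T|%:R))
    / Num.max ((Num.sqrt be1)^-1)
              ((1 + Num.sqrt (be2 / be1)) * (Num.sqrt al1)^-1 * m%:R
                 * coherence (dual_frame a) a)
    * hnorm x
    <= Num.sqrt (\sum_(k in ~: S) cmod (ip x (a k)) ^+ 2)
       + Num.sqrt (\sum_(j in ~: T) cmod (ip x (b j)) ^+ 2).
Proof.
move=> _ x.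
have [al10 [al12 hfA]] := hA.
have [be10 [be12 hfB]] := hB.
have al20 : 0 < al2 by exact: (lt_le_trans al10 al12).
have be20 : 0 < be2 by exact: (lt_le_trans be10 be12).
set xS := \sum_(k in S) ip x (a k) *: dual_frame a k.
set xSc := \sum_(k in ~: S) ip x (a k) *: dual_frame a k.
have hx : x = xS + xSc.
  rewrite {1}(recon hA x) (bigID (fun k => k \in S)) /=; congr (_ + _).
  by apply: eq_bigl => k; rewrite in_setC.
set mu := coherence (dual_frame a) b.
set nu := coherence (dual_frame a) a.
set us := Num.sqrt (\sum_(k in ~: S) cmod (ip x (a k)) ^+ 2).
set vt := Num.sqrt (\sum_(j in ~: T) cmod (ip x (b j)) ^+ 2).
have mu0 : 0 <= mu by apply: coh_ge0.
have nu0 : 0 <= nu by apply: coh_ge0.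
have us0 : 0 <= us by apply: sqrtr_ge0.
have vt0 : 0 <= vt by apply: sqrtr_ge0.
have h0 := hnorm_ge0 x.
have stA : Num.sqrt be1 * hnorm x <=
    Num.sqrt (\sum_(j in T) cmod (ip x (b j)) ^+ 2) + vt.
  have hs := sqrt_split T (f := fun j => cmod (ip x (b j)) ^+ 2) (fun j => sqr_ge0 _).
  apply: (@le_trans _ _ (Num.sqrt (\sum_j cmod (ip x (b j)) ^+ 2)) _ _ _ hs).
  rewrite -(ger0_norm h0) -sqrtr_sqr -(sqrtrM _ (ltW be10)); apply: ler_wsqrtr.
  exact: (hfB x).1.
set c := mu * (Num.sqrt #|S|%:R * (Num.sqrt al2 * hnorm x)).
have c0 : 0 <= c by rewrite !mulr_ge0 ?sqrtr_ge0.
have stB : forall j, cmod (ip x (b j)) <= c + cmod (ip xSc (b j)).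
  move=> j; rewrite {1}hx ip_addl; apply: le_trans (cmodD _ _) _.
  rewrite lerD2r /xS ip_suml; apply: le_trans (cmod_sum _ _) _.
  apply: (@le_trans _ _ (\sum_(k in S) cmod (ip x (a k)) * mu)).
    by apply: ler_sum => k _; rewrite ip_scalel cmodM ler_wpM2l ?cmod_ge0 // coh_le.
  rewrite -mulr_suml mulrC /c ler_wpM2l //.
  apply: le_trans (sum_le_sqrt S (fun k => cmod_ge0 (ip x (a k)))) _.
  rewrite ler_wpM2l ?sqrtr_ge0 //.
  rewrite -(ger0_norm h0) -sqrtr_sqr -(sqrtrM _ (ltW al20)); apply: ler_wsqrtr.
  apply: (le_trans _ (hfA x).2).
  apply: sum_sub_le => k; exact: sqr_ge0.
have stC : Num.sqrt (\sum_(j in T) cmod (ip x (b j)) ^+ 2) <=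
    Num.sqrt #|T|%:R * c + Num.sqrt be2 * hnorm xSc.
  apply: le_trans (L2 T c0 (fun j => cmod_ge0 (ip xSc (b j)))
      (fun j => cmod_ge0 (ip x (b j))) stB) _.
  rewrite lerD2l.
  rewrite -(ger0_norm (hnorm_ge0 xSc)) -sqrtr_sqr -(sqrtrM _ (ltW be20)); apply: ler_wsqrtr.
  apply: (le_trans _ (hfB xSc).2).
  apply: sum_sub_le => k; exact: sqr_ge0.
have e1 : forall l, cmod (ip xSc (a l)) <= nu * (Num.sqrt m%:R * us).
  move=> l; rewrite /xSc ip_suml; apply: le_trans (cmod_sum _ _) _.
  apply: (@le_trans _ _ (\sum_(k in ~: S) cmod (ip x (a k)) * nu)).
    by apply: ler_sum => k _; rewrite ip_scalel cmodM ler_wpM2l ?cmod_ge0 // coh_le.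
  rewrite -mulr_suml mulrC ler_wpM2l //.
  apply: le_trans (sum_le_sqrt (~: S) (fun k => cmod_ge0 (ip x (a k)))) _.
  rewrite ler_wpM2r ?sqrtr_ge0 // ler_sqrt ?ler0n // ler_nat.
  by rewrite -[X in (_ <= X)%N](card_ord m) max_card.
have e2 : al1 * hnorm xSc ^+ 2 <= (m%:R * nu * us) ^+ 2.
  apply: le_trans (hfA xSc).1 _.
  apply: (@le_trans _ _ (\sum_(l < m) (nu * (Num.sqrt m%:R * us)) ^+ 2)).
    apply: ler_sum => l _.
    have Hn : nu * (Num.sqrt m%:R * us) \is Num.nneg.
      by rewrite nnegrE (mulr_ge0 nu0 (mulr_ge0 (sqrtr_ge0 _) us0)).
    have Hc : cmod (ip xSc (a l)) \is Num.nneg by rewrite nnegrE cmod_ge0.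
    by rewrite (ler_sqr Hc Hn) e1.
  rewrite sumr_const card_ord !exprMn sqr_sqrtr ?ler0n // -[_ *+ m]mulr_natr.
  by rewrite le_eqVlt; apply/orP; left; apply/eqP; ring.
set sa := Num.sqrt al1.
have sa0 : 0 < sa by rewrite sqrtr_gt0.
have e3 : sa * hnorm xSc <= m%:R * nu * us.
  have H1 : sa * hnorm xSc \is Num.nneg by rewrite nnegrE mulr_ge0 ?hnorm_ge0 // ltW.
  have H2 : m%:R * nu * us \is Num.nneg by rewrite nnegrE !mulr_ge0 ?ler0n.
  by rewrite -(ler_sqr H1 H2) exprMn (sqr_sqrtr (ltW al10)).
set K := sa^-1 * m%:R * nu.
have K0 : 0 <= K.
  apply: mulr_ge0 => //; apply: mulr_ge0; last exact: ler0n.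
  by rewrite invr_ge0 ltW.
have stD : hnorm xSc <= K * us.
  rewrite /K -!mulrA -[hnorm xSc](mulKf (lt0r_neq0 sa0)).
  apply: ler_wpM2l; first by rewrite invr_ge0 ltW.
  by rewrite !mulrA.
set sb := Num.sqrt be1.
have sb0 : 0 < sb by rewrite sqrtr_gt0.
set ib := sb^-1.
have ib0 : 0 < ib by rewrite invr_gt0.
have ibsb : ib * sb = 1 by rewrite mulVf // lt0r_neq0.
have E1 : Num.sqrt (al2 / be1) = Num.sqrt al2 * ib.
  by rewrite (sqrtrM _ (ltW al20)) (sqrtrV (ltW be10)).
have E2 : Num.sqrt (be2 / be1) = Num.sqrt be2 * ib.
  by rewrite (sqrtrM _ (ltW be20)) (sqrtrV (ltW be10)).
rewrite E1 E2 -/sa -/ib.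
set Mx := Num.max _ _.
have Mx1 : ib <= Mx by rewrite le_max lexx.
have Mx2 : (1 + Num.sqrt be2 * ib) * sa^-1 * m%:R * nu <= Mx by rewrite le_max lexx orbT.
have Mx0 : 0 < Mx by exact: (lt_le_trans ib0 Mx1).
have key : sb * hnorm x <= Num.sqrt #|T|%:R * c + Num.sqrt be2 * (K * us) + vt.
  apply: le_trans stA _; rewrite lerD2r; apply: le_trans stC _.
  by rewrite lerD2l ler_wpM2l ?sqrtr_ge0.
have key2 := ler_wpM2l (ltW ib0) key.
rewrite mulrA ibsb mul1r /c /K in key2.
have sbe2 : 0 <= Num.sqrt be2 by apply: sqrtr_ge0.
have Kb : Num.sqrt be2 * ib * (sa^-1 * m%:R * nu) <= Mx.
  apply: (le_trans _ Mx2); rewrite -!mulrA mulrDl mul1r -!mulrA lerDr.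
  apply: mulr_ge0; first by rewrite invr_ge0; exact: ltW.
  by apply: mulr_ge0 => //; exact: ler0n.
rewrite mulrAC ler_pdivrMr //.
set P1 := Num.sqrt be2 * ib * (sa^-1 * m%:R * nu).
have H1 : P1 * us <= Mx * us by rewrite ler_wpM2r.
have H2 : ib * vt <= Mx * vt by rewrite ler_wpM2r.
have : hnorm x <= P1 * us + ib * vt + Num.sqrt al2 * ib * mu * Num.sqrt #|S|%:R * Num.sqrt #|T|%:R * hnorm x.
  apply: le_trans key2 _; rewrite /P1 le_eqVlt; apply/orP; left; apply/eqP; ring.
nra.
Qed.
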